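(* Let $N=\ker\psi\subseteq G_3$. Then $\beta(N)\supseteq A_{12}$, the alternating group on the twelve edge positions.
   Context: The $3\times3\times3$ Rubik's cube consists of 8 corner cubelets (3 stickers each), 12 edge cubelets (2 stickers each) and 6 face-center cubelets. $G_3$ is the group of permutations of the 48 corner and edge stickers generated by the six moves $u_3,d_3,f_3,b_3,l_3,r_3$ rotating respectively the top, bottom, front, back, left, right layer of nine cubelets by $90^\circ$ clockwise as seen from outside facing that face. $G_2$ is the analogous group for the $2\times2\times2$ cube (8 corner cubelets, 24 stickers) with generators $u_2,\dots,r_2$, and $\psi:G_3\to G_2$ is the homomorphism with $u_3\mapsto u_2$, $d_3\mapsto d_2$, etc. (it records the action on corner stickers). $\beta:G_3\to S_{12}$ records the permutation of the 12 edge positions. *)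

(* Defs.v *)
From mathcomp Require Import all_boot fingroup perm alt.
Set Implicit Arguments. Unset Strict Implicit. Unset Printing Implicit Defensive.

(* Coordinates: 'I_3 with 0,1,2 standing for -1,0,+1.  Axes are also indexed
   by 'I_3: axis 0 = x (towards the right face), 1 = y (towards the up face),
   2 = z (towards the front face). *)
Definition lo : 'I_3 := @Ordinal 3 0 isT.
Definition mid : 'I_3 := @Ordinal 3 1 isT.
Definition hi : 'I_3 := @Ordinal 3 2 isT.
Definition neg (x : 'I_3) : 'I_3 := rev_ord x.

Definition vec := ('I_3 * 'I_3 * 'I_3)%type.
Definition get (v : vec) (i : 'I_3) : 'I_3 :=
  match nat_of_ord i with 0 => v.1.1 | 1 => v.1.2 | _ => v.2 end.
Definition mkv (f : 'I_3 -> 'I_3) : vec := (f lo, f mid, f hi).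
Definition nnz (v : vec) : nat := count (fun c => c != mid) [:: v.1.1; v.1.2; v.2].

(* rotation of space by +90 degrees (ccw = true, right-hand rule) or by
   -90 degrees (ccw = false) about the coordinate axis a:
   with (a, b, c) cyclic, +90 deg sends e_b to e_c and e_c to -e_b. *)
Definition rot (a : 'I_3) (ccw : bool) (v : vec) : vec :=
  mkv (fun i => let b := ordS a in let c := ordS b in
     if i == b then (if ccw then neg (get v c) else get v c)
     else if i == c then (if ccw then get v b else neg (get v b))
     else get v i).

(* A sticker: (position of its cubelet, outward unit normal of the sticker). *)
Definition sticker := (vec * vec)%type.

(* the 48 corner and edge stickers of the 3x3x3 cube: the normal is a unit
   coordinate vector pointing outward at a face of the cubelet lying on the
   surface, and the cubelet has at least two nonzero coordinates *)
Definition valid3 (x : sticker) : bool :=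
  [&& nnz x.2 == 1,
      all (fun i => (get x.2 i != mid) ==> (get x.1 i == get x.2 i)) [:: lo; mid; hi]
    & 1 < nnz x.1].
(* the 24 stickers of the 2x2x2 cube = the corner stickers *)
Definition valid2 (x : sticker) : bool := valid3 x && (nnz x.1 == 3).

(* quarter turn of the layer {x_a = s} (s = lo or hi), clockwise as seen from
   outside facing that face (s = hi : -90 deg about +e_a;
   s = lo : +90 deg about +e_a, i.e. -90 deg about -e_a) *)
Definition turn (a s : 'I_3) (x : sticker) : sticker :=
  if get x.1 a == s then (rot a (s != hi) x.1, rot a (s != hi) x.2) else x.
Definition unturn (a s : 'I_3) (x : sticker) : sticker :=
  if get x.1 a == s then (rot a (s == hi) x.1, rot a (s == hi) x.2) else x.

Definition ordl : seq 'I_3 := [:: lo; mid; hi].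
Definition vecl : seq vec :=
  [seq (xy, z) | xy <- [seq (x, y) | x <- ordl, y <- ordl], z <- ordl].
Definition stl : seq sticker := [seq (p, n) | p <- vecl, n <- vecl].

Lemma mem_ordl (x : 'I_3) : x \in ordl.
Proof. by case: x => [[|[|[|m]]] H]. Qed.

Lemma mem_vecl (v : vec) : v \in vecl.
Proof.
case: v => [[x y] z].
by apply: (allpairs_f (fun xy z => (xy, z))); [apply: (allpairs_f pair)|];
  rewrite ?mem_ordl.
Qed.

Lemma mem_stl (x : sticker) : x \in stl.
Proof. by case: x => p n; apply: (allpairs_f pair); rewrite mem_vecl. Qed.

Lemma rot_check :
  all (fun a => all (fun c => all (fun v =>
        (get (rot a c v) a == get v a) && (rot a (~~ c) (rot a c v) == v))
     vecl) [:: true; false]) ordl.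
Proof. by vm_compute. Qed.

Lemma turn_check :
  all (fun a => all (fun s => all (fun x =>
      (valid3 (turn a s x) == valid3 x) && (valid2 (turn a s x) == valid2 x))
     stl) ordl) ordl.
Proof. by vm_compute. Qed.

Lemma rot_both a c v :
  (get (rot a c v) a = get v a) /\ (rot a (~~ c) (rot a c v) = v).
Proof.
move/allP: rot_check => /(_ a (mem_ordl a))/allP/(_ c) H.
have {H} /allP/(_ v (mem_vecl v))/andP[/eqP -> /eqP ->] // : all (fun v =>
        (get (rot a c v) a == get v a) && (rot a (~~ c) (rot a c v) == v)) vecl.
by apply: H; case: c.
Qed.

Lemma rotK a c v : rot a (~~ c) (rot a c v) = v.
Proof. by case: (rot_both a c v). Qed.

Lemma rotK' a c v : rot a c (rot a (~~ c) v) = v.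
Proof. by rewrite -{1}[c]negbK rotK. Qed.

Lemma rot_get a c v : get (rot a c v) a = get v a.
Proof. by case: (rot_both a c v). Qed.

Lemma turnK a s : cancel (turn a s) (unturn a s).
Proof.
move=> [p n]; rewrite /turn /unturn /=.
case: (eqVneq (get p a) s) => [E|N]; last by rewrite /= (negPf N).
by rewrite /= rot_get E eqxx !rotK'.
Qed.

Lemma turn_valid a s x :
  (valid3 (turn a s x) = valid3 x) /\ (valid2 (turn a s x) = valid2 x).
Proof.
move/allP: turn_check => /(_ a (mem_ordl a))/allP/(_ s (mem_ordl s))
  /allP/(_ x (mem_stl x))/andP[/eqP -> /eqP ->]; done.
Qed.

Definition St3 := {x : sticker | valid3 x}.
Definition St2 := {x : sticker | valid2 x}.

Definition turn3 a s (x : St3) : St3 :=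
  exist _ (turn a s (val x)) (etrans (proj1 (turn_valid a s (val x))) (valP x)).
Definition turn2 a s (x : St2) : St2 :=
  exist _ (turn a s (val x)) (etrans (proj2 (turn_valid a s (val x))) (valP x)).

Lemma turn3_inj a s : injective (turn3 a s).
Proof. by move=> x y /(congr1 val) /= /(can_inj (turnK a s)) /val_inj. Qed.
Lemma turn2_inj a s : injective (turn2 a s).
Proof. by move=> x y /(congr1 val) /= /(can_inj (turnK a s)) /val_inj. Qed.

Definition move3 a s : {perm St3} := perm (@turn3_inj a s).
Definition move2 a s : {perm St2} := perm (@turn2_inj a s).

(* faces: up = {y = +1}, down = {y = -1}, front = {z = +1}, back = {z = -1},
   left = {x = -1}, right = {x = +1} *)
Definition u3 := move3 mid hi.  Definition d3 := move3 mid lo.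
Definition f3 := move3 hi hi.   Definition b3 := move3 hi lo.
Definition l3 := move3 lo lo.   Definition r3 := move3 lo hi.
Definition u2 := move2 mid hi.  Definition d2 := move2 mid lo.
Definition f2 := move2 hi hi.   Definition b2 := move2 hi lo.
Definition l2 := move2 lo lo.   Definition r2 := move2 lo hi.

Definition G3 : {set {perm St3}} := <<[set u3; d3; f3; b3; l3; r3]>>%g.
Definition G2 : {set {perm St2}} := <<[set u2; d2; f2; b2; l2; r2]>>%g.

(* psi : G3 -> G2, the action on corner stickers (for g in G3 the function
   below is a permutation; the fallback 1 is never used on G3).  It is the
   homomorphism with u3 |-> u2, ..., r3 |-> r2. *)
Definition psi_fun (g : {perm St3}) (c : St2) : St2 :=
  if insub (val c) is Some x then odflt c (insub (val (g x))) else c.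
Definition psi (g : {perm St3}) : {perm St2} := insubd (1%g : {perm St2}) ([ffun c => psi_fun g c] : {ffun St2 -> St2}).

Definition EdgePos := {p : vec | nnz p == 2}.

Definition beta_fun (g : {perm St3}) (e : EdgePos) : EdgePos :=
  if [pick x : St3 | (val x).1 == val e] is Some x then odflt e (insub (val (g x)).1)
  else e.
Definition beta (g : {perm St3}) : {perm EdgePos} :=
  insubd (1%g : {perm EdgePos}) ([ffun e => beta_fun g e] : {ffun EdgePos -> EdgePos}).

Definition N : {set {perm St3}} := G3 :&: [set g | psi g == 1%g].

(* Main.v *)
Require Import Defs.
From mathcomp Require Import all_boot fingroup perm alt.
Set Implicit Arguments. Unset Strict Implicit. Unset Printing Implicit Defensive.

Local Open Scope group_scope.

Lemma alt_gen (T : finType) (H : {set {perm T}}) :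
  1 \in H -> (forall a b, a \in H -> b \in H -> a * b \in H) ->
  (forall x y z : T, x != y -> y != z -> x != z -> tperm x y * tperm y z \in H) ->
  Alt T \subset H.
Proof.
move=> H1 HM H3.
have L x y z : x != y -> y != z -> tperm x y * tperm y z \in H.
  move=> xy yz; have [<-|xz] := eqVneq x z; last by apply: H3.
  by rewrite tpermC tperm2.
have P2 a b c d : a != b -> c != d -> tperm a b * tperm c d \in H.
  move=> ab cd; have [bc|bc] := eqVneq b c; first by subst c; apply: L.
  have -> : tperm a b * tperm c d = (tperm a b * tperm b c) * (tperm b c * tperm c d).
    by rewrite !mulgA -(mulgA (tperm a b) (tperm b c) (tperm b c)) tperm2 mulg1.
  by apply: HM; apply: L => //; rewrite eq_sym.
apply/subsetP => s; rewrite Alt_even; case: (prod_tpermP s) => ts -> dts.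
rewrite odd_perm_prod //.
have [n le] := ubnP (size ts); elim: n ts le dts => // n IH [|t1 [|t2 ts]] /=.
- by rewrite big_nil.
- by [].
- move=> sz /andP[d1 /andP[d2 dts]]; rewrite negbK => ev.
  rewrite !big_cons mulgA; apply: HM; first exact: P2.
  by rewrite ltnS in sz; apply: IH => //; exact: ltnW.
Qed.

Definition mvp (a s : 'I_3) (p : vec) : vec :=
  if get p a == s then Defs.rot a (s != hi) p else p.

Lemma move3_pos a s x : (val (move3 a s x)).1 = mvp a s (val x).1.
Proof. by rewrite /move3 permE /turn3 /= /turn /mvp; case: ifP. Qed.

Lemma nnz_rot_check : all (fun a => all (fun c => all (fun v =>
   nnz (Defs.rot a c v) == nnz v) vecl) [:: true; false]) ordl.
Proof. by vm_compute. Qed.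

Lemma nnz_rot a c v : nnz (Defs.rot a c v) = nnz v.
Proof.
move/allP: nnz_rot_check => /(_ a (mem_ordl a))/allP/(_ c) H.
have {}H : all (fun v => nnz (Defs.rot a c v) == nnz v) vecl by apply: H; case: c.
by move/allP: H => /(_ v (mem_vecl v))/eqP.
Qed.

Lemma nnz_mvp a s p : nnz (mvp a s p) = nnz p.
Proof. by rewrite /mvp; case: ifP => // _; rewrite nnz_rot. Qed.

Definition PG : {set {perm St3}} :=
  [set g : {perm St3} | [forall x : St3, forall y : St3, ((val x).1 == (val y).1) ==> ((val (g x)).1 == (val (g y)).1)]
        && [forall x : St3, nnz (val (g x)).1 == nnz (val x).1]].

Lemma PGP (g : {perm St3}) : reflect ((forall x y : St3, (val x).1 = (val y).1 -> (val (g x)).1 = (val (g y)).1)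
                       /\ (forall x, nnz (val (g x)).1 = nnz (val x).1)) (g \in PG).
Proof.
rewrite inE; apply: (iffP andP) => [[/forallP H1 /forallP H2]|[H1 H2]]; split.
- by move=> x y E; move/forallP: (H1 x) => /(_ y); rewrite E eqxx /= => /eqP.
- by move=> x; apply/eqP.
- apply/forallP => x; apply/forallP => y; apply/implyP => /eqP E; apply/eqP; exact: H1.
- by apply/forallP => x; apply/eqP.
Qed.

Lemma group_set_PG : group_set PG.
Proof.
apply/group_setP; split; first by apply/PGP; split => *; rewrite ?perm1.
move=> g h /PGP[g1 g2] /PGP[h1 h2]; apply/PGP; split => [x y E|x]; rewrite !permM.
  by apply: h1; apply: g1.
by rewrite h2 g2.
Qed.
Canonical PG_group := group group_set_PG.

Lemma gens_PG a s : move3 a s \in PG.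
Proof. by apply/PGP; split => [x y E|x]; rewrite !move3_pos ?E // nnz_mvp. Qed.

Canonical G3_group := Eval hnf in [group of G3].

Lemma G3_PG : G3 \subset PG.
Proof.
rewrite /G3 gen_subG; apply/subsetP => g gin; apply/PGP; move: gin; rewrite !inE.
by rewrite /u3 /d3 /f3 /b3 /l3 /r3 => /orP[/orP[/orP[/orP[/orP[|]|]|]|]|] /eqP ->; apply/PGP; apply: gens_PG.
Qed.

Lemma G3P g : g \in G3 ->
  (forall x y : St3, (val x).1 = (val y).1 -> (val (g x)).1 = (val (g y)).1)
  /\ (forall x, nnz (val (g x)).1 = nnz (val x).1).
Proof. by move=> gG; apply/PGP; apply: (subsetP G3_PG). Qed.

Definition FC : {set {perm St3}} :=
  [set g : {perm St3} | [forall x : St3, (nnz (val x).1 == 3) ==> (g x == x)]].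

Lemma FCP (g : {perm St3}) : reflect (forall x : St3, nnz (val x).1 = 3 -> g x = x) (g \in FC).
Proof.
rewrite inE; apply: (iffP forallP) => [H x E|H x].
  by move: (H x); rewrite E eqxx /= => /eqP.
by apply/implyP => /eqP E; rewrite H.
Qed.

Definition Np := G3 :&: FC.

Lemma FC_psi g : g \in FC -> psi g = 1.
Proof.
move/FCP=> Hg.
have E : [ffun c => psi_fun g c] = [ffun c : St2 => c].
  apply/ffunP => c; rewrite !ffunE /psi_fun.
  have /andP[v3 /eqP c3] : valid2 (val c) := valP c.
  case: insubP => [u _ uE | ]; last by rewrite v3.
  by rewrite Hg ?uE // valK.
apply/permP => c; rewrite perm1 /psi E -pvalE insubdK ?ffunE //.
by apply/injectiveP => x y; rewrite !ffunE.
Qed.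

Lemma Np_N : Np \subset N.
Proof.
apply/subsetP => g /setIP[gG gF]; rewrite /N; apply/setIP; split => //.
by rewrite inE FC_psi.
Qed.

Definition nrm (p : vec) : vec :=
  if p.1.1 != mid then (p.1.1, mid, mid)
  else if p.1.2 != mid then (mid, p.1.2, mid) else (mid, mid, p.2).

Lemma nrm_check : all (fun p => (nnz p == 2) ==> valid3 (p, nrm p)) vecl.
Proof. by vm_compute. Qed.

Lemma est_proof (e : EdgePos) : valid3 (val e, nrm (val e)).
Proof.
move/allP: nrm_check => /(_ (val e) (mem_vecl _)).
by have -> : nnz (val e) == 2 := valP e.
Qed.

Definition est (e : EdgePos) : St3 := exist (fun x => valid3 x) (val e, nrm (val e)) (est_proof e).
Lemma est1 e : (val (est e)).1 = val e. Proof. by []. Qed.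

Lemma beta_funE g e x : g \in G3 -> (val x).1 = val e ->
  val (beta_fun g e) = (val (g x)).1.
Proof.
move=> /G3P[H1 H2] xe; rewrite /beta_fun.
case: pickP => [y /eqP ye | none]; last by have := none x; rewrite xe eqxx.
have -> : (val (g y)).1 = (val (g x)).1 by apply: H1; rewrite ye xe.
case: insubP => [u _ -> // | ].
by rewrite H2 xe; have -> : nnz (val e) == 2 := valP e.
Qed.

Lemma beta_inj g : g \in G3 -> injectiveb [ffun e => beta_fun g e].
Proof.
move=> gG; apply/injectiveP => e1 e2; rewrite !ffunE => E.
have /G3P[H1 _] : g^-1 \in G3 by rewrite groupV.
apply: val_inj; rewrite -(est1 e1) -(est1 e2).
have := congr1 val E; rewrite (beta_funE gG (est1 e1)) (beta_funE gG (est1 e2)) => E'.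
by have := H1 _ _ E'; rewrite !permK.
Qed.

Lemma betaE g e x : g \in G3 -> (val x).1 = val e -> val (beta g e) = (val (g x)).1.
Proof.
move=> gG xe; rewrite /beta -pvalE insubdK; last exact: beta_inj gG.
rewrite ffunE.
exact: beta_funE.
Qed.

Lemma betaM g h : g \in G3 -> h \in G3 -> beta (g * h) = beta g * beta h.
Proof.
move=> gG hG; apply/permP => e; apply: val_inj; rewrite permM.
rewrite (betaE (groupM gG hG) (est1 e)) permM.
by rewrite (betaE hG (esym (betaE gG (est1 e)))).
Qed.

Lemma beta1 : beta 1 = 1.
Proof.
apply/permP => e; apply: val_inj.
by rewrite perm1 (betaE (group1 G3_group) (est1 e)) perm1.
Qed.

Lemma betaV g : g \in G3 -> beta g^-1 = (beta g)^-1.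
Proof.
move=> gG; apply: (mulIg (beta g)); rewrite -betaM ?groupV //.
by rewrite !mulVg beta1.
Qed.

Lemma betaJ n s : n \in G3 -> s \in G3 -> beta (n ^ s) = (beta n) ^ (beta s).
Proof.
move=> nG sG; rewrite !conjgE betaM ?groupV ?groupM // betaM // betaV //.
Qed.

Lemma Np_conj n s : n \in Np -> s \in G3 -> n ^ s \in Np.
Proof.
move=> /setIP[nG /FCP nF] sG; apply/setIP; split; first exact: groupJ.
apply/FCP => x cx; rewrite conjgE !permM nF ?permKV //.
by have /G3P[_ ->] : s^-1 \in G3 by rewrite groupV.
Qed.

Definition H := beta @: Np.

Lemma H1 : 1 \in H.
Proof.
apply/imsetP; exists 1; last by rewrite beta1.
by apply/setIP; split; [exact: (group1 G3_group) | apply/FCP => x _; rewrite perm1].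
Qed.

Lemma HM a b : a \in H -> b \in H -> a * b \in H.
Proof.
case/imsetP => g gN ->; case/imsetP => h hN ->.
move: gN hN => /setIP[gG /FCP gF] /setIP[hG /FCP hF].
apply/imsetP; exists (g * h); last by rewrite betaM.
apply/setIP; split; first exact: groupM.
apply/FCP => x cx; rewrite permM gF // hF //.
Qed.

Lemma HJ a s : a \in H -> s \in G3 -> a ^ beta s \in H.
Proof.
case/imsetP => g gN -> sG; apply/imsetP; exists (g ^ s); first exact: Np_conj.
by rewrite betaJ //; case/setIP: gN.
Qed.

Definition T3 (x y z : EdgePos) := tperm x y * tperm y z \in H.

Lemma T3J x y z s : s \in G3 -> T3 x y z -> T3 (beta s x) (beta s y) (beta s z).
Proof. by move=> sG Hx; rewrite /T3 -!tpermJ -conjMg; apply: HJ. Qed.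

Definition tri := (vec * vec * vec)%type.
Definition Tv (t : tri) := exists x y z : EdgePos,
  [/\ val x = t.1.1, val y = t.1.2, val z = t.2 & T3 x y z].

Definition genl : seq ('I_3 * 'I_3) :=
  [:: (mid, hi); (mid, lo); (hi, hi); (hi, lo); (lo, lo); (lo, hi)].

Lemma genl_G3 g : g \in genl -> move3 g.1 g.2 \in G3.
Proof.
move=> gl; apply: mem_gen.
have : all (fun g => move3 g.1 g.2 \in [set u3; d3; f3; b3; l3; r3]) genl.
  by rewrite /= /u3 /d3 /f3 /b3 /l3 /r3 !inE !eqxx ?orbT.
by move/allP; apply.
Qed.

Definition mvt (g : 'I_3 * 'I_3) (t : tri) : tri :=
  (mvp g.1 g.2 t.1.1, mvp g.1 g.2 t.1.2, mvp g.1 g.2 t.2).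

Lemma beta_move g e : g \in genl -> val (beta (move3 g.1 g.2) e) = mvp g.1 g.2 (val e).
Proof. by move=> gl; rewrite (betaE (genl_G3 gl) (est1 e)) move3_pos. Qed.

Lemma Tv_step g t : g \in genl -> Tv t -> Tv (mvt g t).
Proof.
move=> gl [x [y [z [ex ey ez Txyz]]]].
exists (beta (move3 g.1 g.2) x), (beta (move3 g.1 g.2) y), (beta (move3 g.1 g.2) z).
split; rewrite ?beta_move ?ex ?ey ?ez //.
by apply: T3J => //; apply: genl_G3.
Qed.

Definition X0 : vec := (lo, hi, mid).
Definition Y0 : vec := (mid, hi, lo).
Definition Z0 : vec := (hi, hi, mid).
Definition t0 : tri := (X0, Y0, Z0).

Definition mvp_inv (a s : 'I_3) (p : vec) : vec :=
  if get p a == s then Defs.rot a (s == hi) p else p.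
Definition mvt_inv (g : 'I_3 * 'I_3) (t : tri) : tri :=
  (mvp_inv g.1 g.2 t.1.1, mvp_inv g.1 g.2 t.1.2, mvp_inv g.1 g.2 t.2).

Definition tril : seq tri := [seq (ab, c) | ab <- [seq (a, b) | a <- vecl, b <- vecl], c <- vecl].
Definition dpred (t : tri) : bool :=
   [&& nnz t.1.1 == 2, nnz t.1.2 == 2, nnz t.2 == 2, t.1.1 != t.1.2, t.1.2 != t.2
     & t.1.1 != t.2].
Definition Lt : seq tri := [seq t <- tril | dpred t].

Local Close Scope group_scope.
Definition cert : seq (nat * nat) := [:: (6, 4); (5, 0); (6, 1); (6, 2); (4, 3); (4, 0); (5, 5); (4, 5); (5, 2); (3, 3); (5, 3); (5, 0); (6, 4); (7, 4); (4, 4); (4, 0); (5, 5); (4, 5); (6, 5); (3, 4); (5, 3); (5, 0); (6, 4); (6, 2); (4, 4); (4, 4); (5, 5); (4, 5); (5, 2); (3, 4); (5, 3); (5, 4); (5, 4); (7, 2); (5, 4); (5, 4); (6, 5); (5, 5); (6, 2); (4, 4); (7, 1); (7, 2); (6, 2); (8, 1); (7, 1); (6, 1); (8, 2); (7, 5); (6, 2); (6, 4); (6, 0); (6, 0); (5, 0); (5, 4); (6, 2); (4, 4); (4, 5); (3, 5); (5, 2); (2, 4); (6, 4); (4, 4); (4, 0); (7, 3); (6, 0); (5, 2); (6, 5); (5, 5); (5, 2); (4, 2); (7, 5); (6, 5); (6, 5); (7, 5); (7, 5); (7, 3); (5, 5); (6, 5); (6, 2); (6, 5); (6, 1); (5,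 4); (5, 0); (6, 3); (6, 5); (6, 3); (4, 5); (5, 5); (5, 2); (5, 4); (7, 1); (7, 1); (5, 2); (8, 1); (6, 2); (6, 0); (5, 2); (7, 1); (6, 2); (5, 2); (5, 1); (5, 4); (5, 0); (6, 4); (5, 2); (5, 3); (3, 4); (5, 0); (4, 0); (4, 2); (6, 4); (5, 1); (6, 1); (6, 2); (5, 1); (4, 1); (6, 1); (5, 5); (5, 1); (4, 4); (6, 4); (6, 2); (7, 3); (7, 2); (5, 4); (5, 3); (6, 5); (5, 5); (6, 3); (4, 4); (6, 0); (6, 3); (6, 3); (6, 0); (4, 0); (4, 3); (6, 3); (5, 5); (5, 0); (4, 4); (6, 4); (6, 3); (4, 0); (5, 3); (4, 3); (3, 3); (5, 3); (5, 5); (4, 3); (4, 3); (7, 1); (6, 2); (5, 2); (7, 1); (6, 2); (5, 1); (7, 2); (6, 5); (6, 2); (5, 1); (6, 3); (6, 3); (5, 0); (5, 1); (5, 3); (3, 3); (4, 3); (4, 5); (4, 3); (3, 4); (5, 4); (5, 4); (3, 0); (6, 1); (5, 0); (5, 0); (5, 0); (5, 5); (4, 0); (4, 0); (7, 5); (7, 5); (5, 5); (6, 5); (6, 5); (5, 3); (4, 5); (5, 5); (5, 2); (5, 5); (6, 4); (6, 5); (4, 0); (5, 3); (5, 5); (4, 5); (3, 5); (6, 1); (4, 2); (4, 5); (6, 2); (6, 2); (4, 2); (7, 3); (5, 2); (5, 0); (5, 5); (6, 1); (6, 5); (5, 2); (6, 3); (5, 3); (4, 0); (5, 1); (4, 3);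 (3, 3); (2, 3); (4, 3); (5, 0); (3, 3); (5, 1); (5, 1); (6, 1); (7, 1); (5, 1); (5, 1); (6, 5); (5, 5); (7, 4); (4, 1); (6, 1); (4, 0); (5, 1); (6, 3); (3, 3); (3, 0); (4, 5); (3, 5); (5, 5); (2, 3); (6, 0); (4, 3); (5, 1); (6, 4); (3, 4); (5, 4); (4, 5); (3, 5); (5, 5); (2, 4); (6, 4); (4, 3); (4, 4); (7, 4); (4, 4); (4, 0); (5, 5); (4, 5); (6, 4); (3, 4); (7, 4); (6, 1); (6, 4); (7, 4); (6, 4); (6, 0); (7, 5); (6, 5); (7, 4); (5, 4); (5, 1); (5, 0); (5, 3); (4, 1); (5, 4); (3, 0); (3, 5); (2, 5); (4, 5); (1, 4); (5, 4); (6, 3); (3, 0); (6, 1); (6, 1); (5, 0); (5, 5); (4, 0); (5, 4); (5, 2); (7, 5); (6, 5); (5, 5); (6, 5); (8, 5); (6, 3); (4, 5); (5, 5); (5, 5); (6, 4); (6, 4); (5, 3); (4, 0); (5, 1); (7, 5); (5, 3); (3, 5); (4, 5); (5, 5); (4, 4); (6, 4); (7, 5); (6, 2); (7, 1); (6, 4); (6, 4); (5, 5); (6, 5); (7, 5); (6, 4); (6, 4); (5, 3); (4, 0); (5, 1); (6, 4); (4, 3); (2, 0); (4, 0); (3, 0); (5, 4); (4, 1); (6, 1); (5, 1); (7, 2); (4, 1); (5, 1); (5, 5); (4, 5); (6, 1); (3, 1); (5, 1); (6, 3); (4, 1); (5, 2); (2, 3); (4, 0); (3, 5); (2, 5); (4,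 5); (1, 3); (6, 0); (6, 0); (7, 0); (7, 1); (5, 4); (5, 4); (7, 5); (6, 5); (6, 0); (5, 0); (6, 3); (3, 3); (5, 4); (6, 4); (3, 3); (4, 4); (4, 5); (3, 5); (5, 4); (2, 3); (6, 1); (5, 1); (6, 4); (6, 1); (5, 1); (6, 2); (6, 5); (5, 5); (6, 2); (4, 1); (4, 1); (5, 0); (5, 0); (3, 1); (4, 2); (4, 4); (2, 5); (1, 5); (3, 5); (0, 0); (6, 4); (6, 4); (4, 4); (7, 3); (6, 4); (6, 2); (6, 5); (5, 0); (4, 0); (5, 5); (6, 5); (5, 5); (6, 5); (5, 5); (7, 5); (5, 3); (5, 5); (4, 5); (6, 2); (5, 1); (5, 1); (4, 3); (5, 4); (4, 3); (6, 5); (4, 3); (4, 5); (5, 3); (5, 2); (3, 3); (7, 0); (6, 0); (5, 4); (6, 1); (5, 2); (5, 0); (5, 2); (5, 5); (6, 5); (5, 0); (6, 4); (5, 3); (5, 4); (6, 1); (5, 4); (4, 4); (3, 4); (5, 0); (4, 0); (4, 4); (6, 3); (7, 4); (6, 3); (7, 3); (6, 3); (5, 3); (7, 3); (6, 5); (6, 3); (5, 3); (7, 3); (7, 3); (5, 0); (6, 3); (5, 3); (4, 3); (5, 3); (5, 5); (5, 3); (4, 3); (7, 4); (6, 3); (6, 4); (8, 1); (6, 4); (6, 4); (7, 5); (6, 5); (7, 4); (5, 3); (7, 0); (5, 3); (6, 0); (7, 3); (5, 0); (5, 4); (6, 4); (6, 5); (6, 3); (5, 3); (8, 4); (7, 3);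 (7, 3); (6, 3); (7, 0); (6, 3); (8, 3); (7, 5); (7, 2); (6, 3); (7, 4); (5, 3); (6, 4); (5, 3); (6, 3); (4, 3); (7, 3); (6, 5); (5, 3); (5, 3); (6, 4); (5, 0); (5, 4); (4, 3); (6, 3); (6, 0); (6, 3); (6, 1); (5, 3); (5, 3); (8, 5); (6, 3); (7, 5); (6, 5); (7, 5); (6, 3); (5, 5); (6, 5); (6, 2); (6, 5); (7, 4); (5, 3); (6, 4); (5, 0); (6, 5); (6, 0); (4, 5); (6, 3); (5, 2); (5, 5); (7, 4); (6, 3); (6, 4); (5, 3); (6, 3); (6, 0); (6, 2); (7, 3); (7, 2); (6, 3); (7, 4); (4, 3); (6, 3); (5, 0); (5, 3); (6, 0); (3, 3); (5, 3); (6, 3); (4, 3); (6, 1); (6, 1); (6, 1); (7, 1); (6, 1); (6, 1); (7, 5); (6, 5); (7, 1); (5, 1); (7, 3); (6, 2); (6, 0); (6, 1); (5, 3); (5, 0); (6, 5); (5, 5); (6, 2); (4, 3); (7, 4); (6, 3); (6, 1); (6, 1); (5, 1); (5, 1); (6, 5); (5, 5); (7, 2); (4, 1); (7, 2); (6, 3); (6, 2); (6, 1); (5, 2); (5, 1); (6, 5); (5, 5); (6, 2); (4, 1); (8, 4); (6, 3); (7, 2); (7, 1); (6, 3); (6, 1); (7, 5); (6, 5); (7, 2); (5, 3); (6, 1); (7, 0); (6, 2); (6, 1); (5, 1); (5, 1); (5, 5); (4, 5); (6, 1); (3, 1); (6, 4); (7, 3); (5, 1); (5, 1); (7, 1); (6,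 2); (7, 5); (6, 5); (6, 1); (5, 1); (8, 5); (8, 3); (7, 5); (7, 2); (7, 5); (7, 2); (6, 5); (7, 5); (7, 2); (7, 1); (7, 5); (7, 1); (6, 5); (6, 0); (6, 1); (6, 2); (5, 5); (6, 5); (6, 1); (6, 1); (7, 2); (7, 3); (6, 2); (6, 2); (8, 2); (6, 2); (6, 1); (7, 2); (7, 2); (6, 2); (6, 4); (6, 1); (5, 2); (6, 1); (6, 1); (6, 3); (4, 1); (6, 2); (5, 0); (5, 1); (5, 1); (7, 4); (6, 1); (6, 1); (6, 2); (4, 1); (6, 1); (5, 0); (5, 2); (5, 1); (6, 1); (5, 2); (5, 0); (5, 1); (4, 2); (2, 0); (4, 5); (3, 0); (3, 2); (3, 0); (6, 4); (6, 3); (6, 4); (7, 1); (6, 2); (4, 4); (6, 5); (5, 4); (5, 4); (5, 4); (6, 4); (5, 3); (5, 0); (6, 1); (5, 4); (3, 4); (5, 5); (4, 4); (4, 4); (4, 4); (6, 1); (4, 0); (6, 4); (5, 3); (5, 2); (3, 0); (5, 5); (4, 0); (4, 2); (4, 0); (7, 1); (6, 1); (7, 3); (6, 3); (7, 2); (5, 1); (6, 2); (6, 2); (5, 2); (6, 2); (6, 3); (6, 3); (5, 3); (4, 3); (6, 1); (6, 3); (5, 3); (5, 0); (5, 0); (5, 3); (6, 5); (6, 3); (6, 5); (5, 3); (5, 5); (5, 5); (3, 5); (4, 5); (4, 2); (4, 5); (5, 1); (5, 0); (5, 5); (5, 0); (4, 1); (4, 5); (2, 5); (3, 5); (3, 2);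 (3, 5); (7, 3); (6, 3); (6, 4); (5, 3); (6, 1); (6, 5); (4, 5); (5, 5); (5, 5); (5, 5); (5, 4); (6, 0); (4, 2); (5, 3); (4, 1); (3, 2); (1, 0); (3, 0); (2, 0); (2, 2); (6, 3); (6, 4); (6, 4); (7, 4); (7, 4); (5, 4); (7, 5); (6, 5); (6, 4); (5, 2); (7, 4); (6, 3); (5, 2); (6, 3); (6, 0); (4, 0); (5, 5); (4, 5); (4, 2); (3, 3); (5, 4); (5, 3); (5, 4); (6, 4); (6, 1); (4, 4); (6, 5); (5, 5); (5, 4); (4, 4); (5, 0); (4, 3); (4, 0); (5, 3); (5, 0); (3, 0); (5, 5); (4, 5); (4, 0); (3, 2); (7, 4); (5, 3); (6, 0); (5, 2); (7, 3); (5, 0); (6, 5); (5, 5); (5, 2); (4, 2); (7, 4); (6, 3); (6, 0); (6, 0); (7, 3); (5, 0); (7, 0); (6, 0); (6, 0); (6, 1); (6, 4); (5, 3); (5, 0); (6, 3); (5, 1); (5, 2); (4, 5); (3, 5); (4, 2); (2, 2); (7, 5); (6, 3); (6, 5); (6, 5); (7, 3); (6, 2); (5, 5); (5, 5); (5, 2); (5, 5); (6, 4); (6, 3); (5, 0); (5, 0); (6, 3); (6, 0); (4, 0); (5, 5); (4, 2); (4, 5); (6, 4); (5, 3); (5, 0); (4, 2); (6, 3); (5, 0); (4, 0); (6, 1); (5, 2); (6, 2); (7, 5); (6, 5); (6, 5); (5, 2); (6, 2); (6, 5); (5, 5); (5, 2); (4, 2); (3, 2); (7, 1); (8, 5); (7,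 5); (8, 5); (9, 5); (7, 5); (7, 5); (7, 4); (8, 2); (6, 4); (7, 1); (7, 1); (5, 5); (7, 5); (7, 5); (6, 5); (6, 5); (6, 5); (6, 5); (5, 3); (7, 5); (7, 3); (7, 5); (7, 1); (8, 5); (6, 5); (6, 1); (6, 1); (7, 5); (5, 1); (7, 5); (6, 3); (6, 5); (7, 3); (7, 5); (5, 5); (6, 5); (6, 0); (6, 5); (5, 1); (8, 5); (7, 3); (7, 5); (6, 5); (8, 5); (7, 5); (6, 5); (6, 5); (7, 2); (6, 3); (8, 5); (7, 1); (7, 5); (6, 5); (8, 1); (7, 5); (7, 5); (7, 5); (7, 2); (6, 1); (6, 1); (7, 3); (7, 3); (6, 3); (6, 1); (7, 3); (6, 3); (5, 1); (6, 5); (4, 1); (6, 5); (7, 3); (5, 5); (4, 5); (6, 5); (6, 5); (6, 5); (5, 5); (5, 5); (6, 2); (7, 5); (8, 5); (6, 5); (5, 5); (6, 5); (6, 5); (6, 0); (5, 5); (6, 2); (6, 5); (7, 2); (7, 3); (6, 4); (5, 2); (7, 2); (6, 2); (6, 0); (6, 2); (6, 2); (6, 5); (7, 5); (7, 3); (6, 5); (5, 5); (7, 1); (7, 1); (6, 5); (5, 1); (6, 5); (6, 2); (7, 4); (7, 5); (6, 1); (7, 1); (8, 5); (6, 4); (6, 1); (7, 5); (7, 1); (6, 3); (7, 1); (7, 3); (4, 5); (6, 1); (6, 5); (5, 0); (5, 3); (5, 5); (6, 3); (5, 5); (6, 4); (7, 4); (6, 5); (7, 4); (7, 5); (5, 4);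 (6, 4); (6, 4); (7, 2); (6, 0); (6, 0); (6, 3); (5, 0); (6, 3); (6, 0); (4, 0); (5, 0); (5, 0); (6, 2); (6, 0); (7, 4); (6, 3); (6, 1); (5, 1); (7, 3); (6, 1); (5, 3); (6, 5); (6, 3); (5, 3); (7, 5); (8, 5); (6, 5); (5, 5); (7, 2); (6, 0); (6, 5); (6, 5); (6, 2); (6, 5); (7, 0); (7, 5); (6, 0); (5, 5); (6, 3); (7, 0); (5, 3); (5, 5); (6, 3); (5, 0); (5, 5); (6, 5); (4, 5); (3, 5); (5, 1); (5, 5); (5, 0); (4, 5); (5, 5); (4, 5); (6, 5); (7, 3); (5, 5); (4, 5); (6, 5); (6, 5); (5, 0); (5, 5); (5, 5); (5, 5); (6, 2); (7, 2); (5, 4); (4, 2); (6, 2); (6, 2); (5, 0); (5, 2); (5, 2); (5, 2); (6, 5); (7, 5); (5, 5); (4, 5); (5, 3); (5, 5); (6, 0); (4, 3); (5, 5); (5, 3); (7, 3); (7, 4); (7, 4); (8, 4); (7, 4); (6, 4); (7, 2); (7, 1); (7, 2); (6, 2); (8, 1); (7, 2); (6, 5); (7, 3); (5, 2); (5, 2); (5, 0); (6, 2); (5, 2); (4, 3); (7, 4); (6, 3); (6, 4); (7, 4); (6, 4); (5, 4); (6, 4); (7, 4); (6, 4); (5, 4); (6, 2); (5, 3); (6, 2); (6, 3); (5, 2); (4, 2); (5, 2); (6, 1); (5, 2); (4, 2); (8, 2); (6, 3); (7, 4); (6, 2); (6, 2); (6, 2); (6, 0); (7, 2); (6, 2); (5,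 2); (7, 2); (6, 3); (6, 2); (5, 2); (7, 3); (5, 2); (6, 2); (7, 2); (6, 2); (6, 0); (7, 0); (6, 0); (6, 2); (6, 0); (6, 2); (5, 2); (5, 0); (5, 2); (4, 2); (3, 2); (6, 2); (6, 3); (6, 5); (5, 5); (7, 2); (5, 0); (5, 2); (6, 5); (6, 2); (5, 2); (8, 1); (7, 3); (7, 5); (6, 5); (7, 5); (6, 2); (6, 1); (6, 5); (6, 2); (6, 2); (7, 2); (7, 3); (7, 5); (6, 5); (7, 3); (5, 2); (5, 2); (6, 2); (6, 1); (5, 2); (7, 1); (7, 0); (7, 5); (6, 5); (6, 1); (4, 2); (6, 2); (4, 0); (5, 1); (5, 0); (6, 4); (6, 4); (5, 1); (7, 3); (7, 4); (6, 1); (6, 1); (7, 1); (6, 0); (6, 1); (7, 4); (6, 3); (3, 0); (6, 1); (5, 2); (5, 3); (4, 0); (5, 0); (4, 0); (4, 0); (5, 4); (7, 5); (5, 2); (8, 5); (6, 2); (6, 5); (6, 2); (7, 1); (6, 5); (6, 2); (7, 5); (6, 5); (4, 4); (7, 5); (6, 5); (5, 5); (5, 2); (6, 5); (5, 5); (5, 4); (6, 4); (5, 0); (5, 4); (4, 3); (6, 3); (5, 3); (5, 0); (6, 0); (5, 0); (5, 3); (6, 4); (7, 5); (5, 4); (4, 2); (7, 2); (6, 5); (5, 2); (6, 2); (5, 2); (5, 2); (6, 4); (6, 0); (5, 4); (4, 3); (6, 1); (6, 3); (5, 3); (5, 5); (4, 5); (5, 3); (4, 4); (5, 4); (3, 4);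 (2, 0); (5, 1); (4, 0); (4, 3); (4, 0); (3, 0); (3, 0); (6, 4); (7, 3); (5, 4); (4, 0); (6, 0); (6, 0); (6, 3); (5, 0); (5, 0); (5, 0); (5, 4); (6, 4); (4, 4); (3, 0); (5, 1); (5, 0); (6, 0); (4, 0); (4, 0); (4, 0); (5, 4); (6, 4); (4, 4); (3, 2); (6, 1); (4, 2); (5, 3); (4, 2); (5, 1); (4, 2)].
Local Open Scope group_scope.

Definition oeq (a b : 'I_3) : bool := eqn a b.
Definition veq (u v : vec) : bool := oeq u.1.1 v.1.1 && oeq u.1.2 v.1.2 && oeq u.2 v.2.
Definition teq (s t : tri) : bool := veq s.1.1 t.1.1 && veq s.1.2 t.1.2 && veq s.2 t.2.

Lemma oeqE a b : oeq a b = (a == b).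
Proof. by rewrite /oeq eqnE. Qed.
Lemma veqE u v : veq u v = (u == v).
Proof. by rewrite /veq !oeqE -!xpair_eqE -!surjective_pairing. Qed.
Lemma teqE s t : teq s t = (s == t).
Proof. by rewrite /teq !veqE -!xpair_eqE -!surjective_pairing. Qed.

Definition dep (L : seq tri) (t : tri) : nat := (nth (0, 0) cert (find (teq t) L)).1.
Definition gof (L : seq tri) (t : tri) := nth (lo, lo) genl (nth (0, 0) cert (find (teq t) L)).2.
Definition par (L : seq tri) (t : tri) := mvt_inv (gof L t) t.
Definition okt (L : seq tri) (t : tri) : bool :=
  if dep L t == 0 then teq t t0 else
  [&& find (teq (par L t)) L < size L, dep L (par L t) < dep L t & teq (mvt (gof L t) (par L t)) t].
Definition chk (L : seq tri) := all (okt L) L.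

Definition okf (L : seq tri) (t : tri) : bool :=
  let c := nth (0, 0) cert (find (teq t) L) in
  let g := nth (lo, lo) genl c.2 in
  let p := mvt_inv g t in
  if c.1 == 0 then teq t t0 else
  let i := find (teq p) L in
  [&& i < size L, (nth (0, 0) cert i).1 < c.1 & teq (mvt g p) t].
Definition chkf (L : seq tri) := all (okf L) L.

Lemma chkfE L : chkf L = chk L.
Proof. by []. Qed.

Lemma cert_ok : chk Lt.
Proof. rewrite -chkfE; by vm_compute. Qed.

Lemma gof_genl L t : gof L t \in genl.
Proof.
rewrite /gof; case: (ltnP (nth (0, 0) cert (find (teq t) L)).2 (size genl)) => [lt|ge].
  exact: mem_nth.
by rewrite nth_default.
Qed.

Lemma Tv_L d : Tv t0 -> forall t, t \in Lt -> dep Lt t <= d -> Tv t.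
Proof.
move=> T0; have := cert_ok; rewrite /chk => /allP Hc.
elim: d => [|d IH] t tL dle; move: (Hc t tL); rewrite /okt.
all: case: eqP => [_ | nz]; rewrite ?teqE.
- by move/eqP => ->.
- by move: dle; rewrite leqn0 => /eqP /nz [].
- by move/eqP => ->.
case/and3P => pL lt /eqP <-.
apply: Tv_step; first exact: gof_genl.
have {}pL : par Lt t \in Lt.
  by rewrite -has_pred1; rewrite -has_find in pL; apply: sub_has pL => u /=; rewrite teqE eq_sym.
by apply: IH pL _; rewrite -ltnS; apply: leq_trans lt dle.
Qed.

Definition wordp (w : seq ('I_3 * 'I_3)) : {perm St3} :=
  foldr (fun g p => move3 g.1 g.2 * p) 1 w.
Definition wev (w : seq ('I_3 * 'I_3)) (x : sticker) : sticker :=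
  foldl (fun x g => turn g.1 g.2 x) x w.

Lemma wordpE w x : val (wordp w x) = wev w (val x).
Proof.
elim: w x => [|g w IH] x /=; first by rewrite perm1.
by rewrite permM IH /move3 permE.
Qed.

Lemma wordp_G3 w : all (mem genl) w -> wordp w \in G3.
Proof.
elim: w => [|g w IH] /=; first by move=> _; exact: (group1 G3_group).
by case/andP => gl wl; rewrite groupM ?IH ?genl_G3.
Qed.

Definition rr : 'I_3 * 'I_3 := (lo, hi).
Definition uu : 'I_3 * 'I_3 := (mid, hi).
Definition n0w := [:: rr; rr; uu; uu; uu; rr; rr; rr; uu; uu; uu; rr; uu; rr; uu; rr; uu; uu; uu; rr].

Lemma n0_check1 : all (fun x => (valid3 x && (nnz x.1 == 3)) ==> (wev n0w x == x)) stl.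
Proof. by vm_compute. Qed.

Definition tv (a b c : vec) : vec := if c == a then b else if c == b then a else c.

Lemma n0_check2 : all (fun p => (nnz p == 2) ==>
   ((wev n0w (p, nrm p)).1 == tv Y0 Z0 (tv X0 Y0 p))) vecl.
Proof. by vm_compute. Qed.

Lemma n0_G3 : wordp n0w \in G3.
Proof. by apply: wordp_G3. Qed.

Lemma n0_Np : wordp n0w \in Np.
Proof.
apply/setIP; split; first exact: n0_G3.
apply/FCP => x cx; apply: val_inj; rewrite wordpE.
move/allP: n0_check1 => /(_ _ (mem_stl (val x))).
have -> : valid3 (val x) := valP x.
by rewrite cx eqxx /= => /eqP.
Qed.

Lemma tperm_val (x y e : EdgePos) : val (tperm x y e) = tv (val x) (val y) (val e).
Proof.
rewrite /tv !(inj_eq val_inj); case: tpermP => [->|->|/eqP/negPf -> /eqP/negPf ->].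
- by rewrite eqxx.
- by case: eqVneq => [->|]; rewrite ?eqxx.
- by [].
Qed.

Definition x0 : EdgePos := exist _ X0 isT.
Definition y0 : EdgePos := exist _ Y0 isT.
Definition z0 : EdgePos := exist _ Z0 isT.

Lemma beta_n0 : beta (wordp n0w) = tperm x0 y0 * tperm y0 z0.
Proof.
apply/permP => e; apply: val_inj.
rewrite (betaE n0_G3 (est1 e)) wordpE permM !tperm_val.
move/allP: n0_check2 => /(_ (val e) (mem_vecl _)).
have -> : nnz (val e) == 2 := valP e.
by move=> /eqP H; exact: H.
Qed.

Lemma Tv0 : Tv t0.
Proof.
exists x0, y0, z0; split => //.
by rewrite /T3 -beta_n0; apply/imsetP; exists (wordp n0w); last done; exact: n0_Np.
Qed.

Lemma all_T3 x y z : x != y -> y != z -> x != z -> T3 x y z.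
Proof.
move=> xy yz xz.
have mt : (val x, val y, val z) \in tril.
  by apply: (allpairs_f (fun ab c => (ab, c))); [apply: (allpairs_f pair)|]; rewrite ?mem_vecl.
have tL : (val x, val y, val z) \in Lt.
  rewrite mem_filter mt andbT /dpred /=.
  have -> : nnz (val x) == 2 := valP x.
  have -> : nnz (val y) == 2 := valP y.
  have -> : nnz (val z) == 2 := valP z.
  by rewrite !(inj_eq val_inj) xy yz xz.
case: (Tv_L Tv0 tL (leqnn _)) => x' [y' [z' [/val_inj -> /val_inj -> /val_inj -> //]]].
Qed.

Theorem proposition3p2 : Alt EdgePos \subset [set beta g | g in N].
Proof.
apply: subset_trans (imsetS beta Np_N).
apply: alt_gen; [exact: H1 | exact: HM | exact: all_T3].
Qed.
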